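(* Let $L=\mathcal{L}\,dt$ be a Lagrangian on $J^1Q$ and let $H=p_i\,dq^i-\mathcal{H}\,dt$ be a Hamiltonian form on $V^*Q$ weakly associated with $L$. Then at every point of the Lagrangian constraint space $N_L$ the forms $H$ and $\widehat H^*H_L$ coincide: $H|_{N_L}=\widehat H^*H_L|_{N_L}$.
   Context: Let $Q\to\mathbb{R}$ be a fibre bundle over the time axis with coordinates $(t,q^i)$; $J^1Q$ is its first jet manifold with coordinates $(t,q^i,q^i_t)$; $V^*Q$ is its vertical cotangent bundle with coordinates $(t,q^i,p_i)$, $\partial^i=\partial/\partial p_i$. A Lagrangian is $L=\mathcal{L}\,dt$ with $\mathcal{L}$ a function on $J^1Q$; put $\pi_i=\partial\mathcal{L}/\partial q^i_t$. The Legendre map $\widehat L:J^1Q\to V^*Q$ over $Q$ is $p_i\circ\widehat L=\pi_i$, and $N_L=\widehat L(J^1Q)$ is the Lagrangian constraint space. The Poincaré–Cartan form is $H_L=\mathcal{L}\,dt+\pi_i(dq^i-q^i_t\,dt)$. A Hamiltonian form is a 1-form on $V^*Q$ locally $H=p_i\,dq^i-\mathcal{H}\,dt$ (the pull-back of the Liouville form $p\,dt+p_i\,dq^i$ of $T^*Q$ by a section of $T^*Q\to V^*Q$); its Hamiltonian map is $\widehat H:V^*Q\to J^1Q$, $q^i_t\circ\widehat H=\partial^i\mathcal{H}$. $H$ is weakly associated with $L$ if $\widehat L\circ\widehat H\circ\widehat L=\widehat L$ and the equality $H=H_{\widehat H}+\widehat H^*L$ holds at points of $N_L$, where $H_{\widehat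 H}=p_i\,dq^i-p_i\partial^i\mathcal{H}\,dt$; in coordinates the latter reads $\mathcal{H}(z)=p_i\partial^i\mathcal{H}(z)-\mathcal{L}(t,q^i,\partial^j\mathcal{H}(z))$ for $z\in N_L$. *)

(* Defs.v *)
From Stdlib Require Import Reals.
From Coquelicot Require Import Coquelicot.
From mathcomp Require Import ssreflect ssrfun ssrbool eqtype ssrnat fintype bigop.

Set Implicit Arguments.
Unset Strict Implicit.
Local Open Scope R_scope.

(* Local chart: Q = R x R^n with coordinates (t, q^i), i : 'I_n.
   J^1Q has coordinates (t, q^i, q^i_t); V^*Q has coordinates (t, q^i, p_i). *)
Definition vec (n : nat) := 'I_n -> R.

Definition upd {n} (f : vec n) (i : 'I_n) (s : R) : vec n :=
  fun j => if j == i then s else f j.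

Definition sumR {n} (f : 'I_n -> R) : R := \big[Rplus/0]_(j < n) f j.

(* A covector at a point of J^1Q (resp. V^*Q), written in the coframe
   dt, dq^i, d(third coordinate) where the third coordinate is q^i_t (resp. p_i). *)
Record cov (n : nat) := Cov { c_t : R; c_q : vec n; c_3 : vec n }.

Definition form (n : nat) := R -> vec n -> vec n -> cov n.

Definition cov_add {n} (a b : cov n) : cov n :=
  Cov (c_t a + c_t b) (fun i => c_q a i + c_q b i) (fun i => c_3 a i + c_3 b i).

Definition dthird {n} (F : R -> vec n -> vec n -> R) (t : R) (q x : vec n)
  (i : 'I_n) : R := Derive (fun s => F t q (upd x i s)) (x i).

Definition momenta {n} (L : R -> vec n -> vec n -> R) t q v : vec n :=
  dthird L t q v.

(* Fibre part of the Hamiltonian map: q^i_t o H^ = d^i Hc *)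
Definition hammap {n} (Hc : R -> vec n -> vec n -> R) t q p : vec n :=
  dthird Hc t q p.

(* Lagrangian constraint space N_L = image of the Legendre map (over Q) *)
Definition N_L {n} (L : R -> vec n -> vec n -> R) (t : R) (q p : vec n) : Prop :=
  exists v : vec n, p = momenta L t q v.

(* Pull-back of a 1-form w on J^1Q along a map V^*Q -> J^1Q over Q,
   (t,q,p) |-> (t,q,phi(t,q,p)). *)
Definition pullback {n} (phi : R -> vec n -> vec n -> vec n) (w : form n) : form n :=
  fun t q p =>
    let y := w t q (phi t q p) in
    Cov (c_t y + sumR (fun j => c_3 y j * Derive (fun s => phi s q p j) t))
        (fun i => c_q y i
           + sumR (fun j => c_3 y j * Derive (fun s => phi t (upd q i s) p j) (q i)))
        (fun i => sumR (fun j => c_3 y j * Derive (fun s => phi t q (upd p i s) j) (p i))).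

Definition lag_form {n} (L : R -> vec n -> vec n -> R) : form n :=
  fun t q v => Cov (L t q v) (fun _ => 0) (fun _ => 0).

(* Poincare-Cartan form H_L = Lc dt + pi_i (dq^i - q^i_t dt) *)
Definition PC_form {n} (L : R -> vec n -> vec n -> R) : form n :=
  fun t q v => Cov (L t q v - sumR (fun i => momenta L t q v i * v i))
                   (momenta L t q v) (fun _ => 0).

Definition ham_form {n} (Hc : R -> vec n -> vec n -> R) : form n :=
  fun t q p => Cov (- Hc t q p) p (fun _ => 0).

Definition HH_form {n} (Hc : R -> vec n -> vec n -> R) : form n :=
  fun t q p => Cov (- sumR (fun i => p i * hammap Hc t q p i)) p (fun _ => 0).

Definition weakly_associated {n} (L Hc : R -> vec n -> vec n -> R) : Prop :=
  (forall t q v, momenta L t q (hammap Hc t q (momenta L t q v)) = momenta L t q v)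
  /\ (forall t q p, N_L L t q p ->
        ham_form Hc t q p
        = cov_add (HH_form Hc t q p) (pullback (hammap Hc) (lag_form L) t q p)).

(* Main.v *)
Require Import Defs.
From Stdlib Require Import Reals.
From Coquelicot Require Import Coquelicot.
From mathcomp Require Import ssreflect ssrfun ssrbool eqtype ssrnat fintype bigop.
From Stdlib Require Import FunctionalExtensionality Lra.

Lemma sum0 (n : nat) (g : 'I_n -> R) : sumR (fun j => (0 * g j)%R) = 0%R.
Proof. rewrite /sumR; apply: (big_ind (fun x => x = 0%R)) => //. - by move=> x y -> ->; rewrite Rplus_0_l. - by move=> j _; rewrite Rmult_0_l. Qed.

Theorem mainTheorem8 (n : nat) (L Hc : R -> vec n -> vec n -> R) :
  weakly_associated L Hc ->
  forall (t : R) (q p : vec n), N_L L t q p ->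
    ham_form Hc t q p = pullback (hammap Hc) (PC_form L) t q p.
Proof.
  move=> [H1 H2] t q p HN.
  have E := H2 t q p HN.
  case: HN => v Hp. subst p.
  rewrite /ham_form /pullback /PC_form /cov_add /HH_form /lag_form /= in E *.
  case: E => Et _ _.
  rewrite !sum0 H1 in Et *.
  f_equal.
  - rewrite Et. lra.
  - apply: functional_extensionality => i. rewrite sum0. lra.
  - apply: functional_extensionality => i. by rewrite sum0.
Qed.
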